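(* Let $r^\star_0\in(r^\star_{3M},\pi/2)$. There exists $C=C(M,k,r^\star_0)>0$ such that for all sufficiently large $\ell$, $$\int_{r^\star_{3M}}^{r^\star_0}\big((R_{\mathrm{QM},\ell}')^2+\ell(\ell+1)R_{\mathrm{QM},\ell}^2\big)\,dr^\star\le Ce^{-C^{-1}\ell}\int_{r^\star_{3M}}^{\pi/2}\big((R_{\mathrm{QM},\ell}')^2+\ell(\ell+1)R_{\mathrm{QM},\ell}^2\big)\,dr^\star.$$
   Context: Fix $M>0$, $k>0$; $\Delta(r)=r^2+k^2r^4-2Mr$, $w:=\Delta/r^4$, viewed as a function of $r^\star$ defined by $dr^\star/dr=r^2/\Delta$, $r^\star(r=+\infty)=\pi/2$; $r^\star_{3M}=r^\star(r=3M)$; prime is $d/dr^\star$. For $\ell\ge2$, $\omega_\ell^2$ is the lowest eigenvalue and $R_{\mathrm{QM},\ell}$ a corresponding real eigenfunction (equivalently a minimiser of the quotient below) of the problem $\omega^2R=-R''+w(\ell(\ell+1)-\frac{6M}{r})R$ on $[r^\star_{3M},\pi/2]$, $R(r^\star_{3M})=0$, $(-2\omega^2R+\frac{\ell(\ell+1)(\ell(\ell+1)-2)}{6M}R'+k^2\ell(\ell+1)R)(\pi/2)=0$, where $$\omega_\ell^2=\inf_{R\in H^1_0((r^\star_{3M},\pi/2])\setminus\{0\}}\frac{\int_{r^\star_{3M}}^{\pi/2}\big((R')^2+w(\ell(\ell+1)-\frac{6M}{r})R^2\big)dr^\star+\frac{6Mk^2}{\ell(\ell+1)-2}R(\frac\pi2)^2}{\int_{r^\star_{3M}}^{\pi/2}R^2\,dr^\star+\frac{12M}{\ell(\ell+1)(\ell(\ell+1)-2)}R(\frac\pi2)^2},$$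 $H^1_0((r^\star_{3M},\pi/2])$ being the $H^1$-closure of smooth functions compactly supported in $(r^\star_{3M},\pi/2]$. *)

(* Defs.v *)
From Stdlib Require Import Reals.
From Coquelicot Require Import Coquelicot.
Open Scope R_scope.

Definition Delta (M k r : R) : R := r ^ 2 + k ^ 2 * r ^ 4 - 2 * M * r.

(* tortoise coordinate: dr*/dr = r^2/Delta, r*(+oo) = pi/2, i.e.
   r*(r) = pi/2 - \int_r^{+oo} s^2/Delta(s) ds   (for r >= 3M > r_+) *)
Definition rstar (M k r : R) : R :=
  PI / 2 - RInt_gen (fun s => s ^ 2 / Delta M k s) (at_point r) (Rbar_locally p_infty).

Definition rstar3M (M k : R) : R := rstar M k (3 * M).

Definition r_of (M k x : R) : R := iota (fun r => 3 * M <= r /\ rstar M k r = x).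

Definition w (M k x : R) : R := Delta M k (r_of M k x) / (r_of M k x) ^ 4.

Definition Lam (l : nat) : R := INR l * (INR l + 1).

Definition Vpot (M k : R) (l : nat) (x : R) : R :=
  w M k x * (Lam l - 6 * M / r_of M k x).

Definition num_Q (M k : R) (l : nat) (f : R -> R) : R :=
  RInt (fun x => (Derive f x) ^ 2 + Vpot M k l x * (f x) ^ 2) (rstar3M M k) (PI / 2)
  + 6 * M * k ^ 2 / (Lam l - 2) * (f (PI / 2)) ^ 2.

Definition den_Q (M k : R) (l : nat) (f : R -> R) : R :=
  RInt (fun x => (f x) ^ 2) (rstar3M M k) (PI / 2)
  + 12 * M / (Lam l * (Lam l - 2)) * (f (PI / 2)) ^ 2.

Definition quotQ (M k : R) (l : nat) (f : R -> R) : R := num_Q M k l f / den_Q M k l f.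

(* admissible trial functions: C^1 on [r*_{3M}, pi/2], vanishing at r*_{3M},
   not identically zero (dense in H^1_0((r*_{3M}, pi/2]) \ {0}) *)
Definition admissible (M k : R) (f : R -> R) : Prop :=
  (forall x, rstar3M M k <= x <= PI / 2 -> ex_derive f x /\ continuous (Derive f) x)
  /\ f (rstar3M M k) = 0
  /\ (exists x, rstar3M M k <= x <= PI / 2 /\ f x <> 0).

(* R_{QM,l}: a (real) minimiser of the quotient, whose minimum value is omega_l^2 *)
Definition is_QM_minimiser (M k : R) (l : nat) (f : R -> R) : Prop :=
  admissible M k f /\ (forall g, admissible M k g -> quotQ M k l f <= quotQ M k l g).

Definition energy (l : nat) (f : R -> R) (x : R) : R :=
  (Derive f x) ^ 2 + Lam l * (f x) ^ 2.

(* Main.v *)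
Require Import Defs.
From Stdlib Require Import Reals.
From Coquelicot Require Import Coquelicot.
Open Scope R_scope.
From Stdlib Require Import Lra Psatz.


Lemma lip_cont (f : R -> R) (K : R) :
  0 < K -> (forall x y, Rabs (f x - f y) <= K * Rabs (x - y)) ->
  forall x, continuous f x.
Proof.
  intros HK Hf x. unfold continuous. apply (filterlim_locally f (f x)).
  intros eps. assert (He : 0 < eps / K) by (apply Rdiv_lt_0_compat; [apply cond_pos|lra]).
  exists (mkposreal _ He). intros y Hy.
  unfold ball in *; simpl in *; unfold AbsRing_ball, abs, minus, plus, opp in *; simpl in *.
  specialize (Hf y x).
  apply Rle_lt_trans with (1 := Hf).
  apply Rlt_le_trans with (K * (eps / K)).
  apply Rmult_lt_compat_l. lra. replace (y - x) with (y + - x) by ring. exact Hy. right; field; lra.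
Qed.

Lemma cont_exRInt (f : R -> R) a b : (forall x, continuous f x) -> ex_RInt f a b.
Proof. intros H. apply (@ex_RInt_continuous R_CompleteNormedModule). intros; apply H. Qed.

Lemma prim_derive (f : R -> R) a : (forall x, continuous f x) ->
  forall x, is_derive (fun y => RInt f a y) x (f x).
Proof.
  intros H x. apply (is_derive_RInt f (fun y => RInt f a y) a x).
  - exists (mkposreal 1 Rlt_0_1). intros y _. apply (@RInt_correct R_CompleteNormedModule). apply cont_exRInt; auto.
  - apply H.
Qed.

Lemma RInt_pos (f : R -> R) a b x0 : (forall x, continuous f x) -> a < b -> a <= x0 <= b ->
  0 < f x0 -> (forall x, a < x < b -> 0 <= f x) -> 0 < RInt f a b.
Proof.
  intros Hc Hab Hx0 Hf0 Hpos.
  assert (Hcx := Hc x0). unfold continuous in Hcx.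
  assert (Hcx' := proj1 (filterlim_locally (F:=locally x0) f (f x0)) Hcx).
  assert (He : 0 < f x0 / 2) by lra.
  destruct (Hcx' (mkposreal _ He)) as [d Hd].
  assert (Hd' : forall y, Rabs (y - x0) < d -> f x0 / 2 < f y).
  { intros y Hy. assert (HH := Hd y).
    unfold ball in HH; simpl in HH; unfold AbsRing_ball, abs, minus, plus, opp in HH; simpl in HH.
    replace (y + - x0) with (y - x0) in HH by ring. specialize (HH Hy).
    apply Rabs_lt_between in HH. lra. }
  assert (dpos := cond_pos d).
  set (p := Rmax a (x0 - d/2)). set (q := Rmin b (x0 + d/2)).
  assert (Hp1 : a <= p) by apply Rmax_l. assert (Hq1 : q <= b) by apply Rmin_l.
  assert (Hp2 : x0 - d/2 <= p) by apply Rmax_r. assert (Hq2 : q <= x0 + d/2) by apply Rmin_r.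
  assert (Hpx : p <= x0) by (unfold p; apply Rmax_lub; lra).
  assert (Hqx : x0 <= q) by (unfold q; apply Rmin_glb; lra).
  assert (Hpq : p < q).
  { unfold p, q. destruct (Rle_dec a (x0 - d/2)); destruct (Rle_dec b (x0 + d/2)).
    - rewrite Rmax_right by lra. rewrite Rmin_left by lra. lra.
    - rewrite Rmax_right by lra. rewrite Rmin_right by lra. lra.
    - rewrite Rmax_left by lra. rewrite Rmin_left by lra. lra.
    - rewrite Rmax_left by lra. rewrite Rmin_right by lra. lra. }
  rewrite <- (RInt_Chasles f a p b) by (apply cont_exRInt; auto).
  rewrite <- (RInt_Chasles f p q b) by (apply cont_exRInt; auto).
  unfold plus; simpl.
  assert (H1 : 0 <= RInt f a p).
  { apply RInt_ge_0; auto. apply cont_exRInt; auto. intros; apply Hpos; lra. }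
  assert (H3 : 0 <= RInt f q b).
  { apply RInt_ge_0; auto. apply cont_exRInt; auto. intros; apply Hpos; lra. }
  assert (H2 : RInt (fun _ => f x0 / 2) p q <= RInt f p q).
  { apply RInt_le. lra. apply cont_exRInt; intros; apply continuous_const.
    apply cont_exRInt; auto. intros x Hx. left. apply Hd'. apply Rabs_def1; lra. }
  rewrite RInt_const in H2. unfold scal in H2; simpl in H2; unfold mult in H2; simpl in H2.
  assert (0 < (q - p) * (f x0 / 2)) by (apply Rmult_lt_0_compat; lra). lra.
Qed.

Lemma Rabs_cases_le (u v w : R) : (u - v <= w) -> (v - u <= w) -> Rabs (u - v) <= w.
Proof. intros. unfold Rabs; destruct (Rcase_abs (u - v)); lra. Qed.

Definition clamp (a b x : R) := Rmax a (Rmin x b).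

Lemma clamp_lip a b : a <= b -> forall x y, Rabs (clamp a b x - clamp a b y) <= 1 * Rabs (x - y).
Proof.
  intros Hab x y. rewrite Rmult_1_l. unfold clamp, Rmax, Rmin.
  unfold Rabs at 2; destruct (Rcase_abs (x - y));
  apply Rabs_cases_le; repeat (destruct Rle_dec); lra.
Qed.

Lemma clamp_id a b x : a <= x <= b -> clamp a b x = x.
Proof. intros. unfold clamp, Rmax, Rmin. repeat destruct Rle_dec; lra. Qed.

Lemma clamp_in a b x : a <= b -> a <= clamp a b x <= b.
Proof. intros. unfold clamp, Rmax, Rmin. repeat destruct Rle_dec; lra. Qed.

Lemma C1_ext (f : R -> R) a b : a <= b ->
  (forall x, a <= x <= b -> ex_derive f x /\ continuous (Derive f) x) ->
  exists fe De : R -> R, (forall x, is_derive fe x (De x)) /\ (forall x, continuous De x) /\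
    (forall x, a <= x <= b -> fe x = f x /\ De x = Derive f x).
Proof.
  intros Hab Hf.
  set (De := fun x => Derive f (clamp a b x)).
  assert (HDe : forall x, continuous De x).
  { intros x. unfold De. apply (continuous_comp (clamp a b) (Derive f)).
    apply (lip_cont _ 1). lra. apply clamp_lip; auto.
    apply Hf. apply clamp_in; auto. }
  exists (fun x => f a + RInt De a x), De. split; [|split; auto].
  - intros x. assert (H := prim_derive De a HDe x).
    assert (H2 := is_derive_plus (fun _ => f a) (fun y => RInt De a y) x 0 (De x) (is_derive_const (f a) x) H).
    simpl in H2. unfold plus in H2; simpl in H2. rewrite Rplus_0_l in H2. exact H2.
  - intros x Hx. split.
    + rewrite (RInt_ext De (Derive f)).
      * rewrite RInt_Derive. ring.
        intros y Hy. rewrite Rmin_left in Hy by lra. rewrite Rmax_right in Hy by lra. apply Hf; lra.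
        intros y Hy. rewrite Rmin_left in Hy by lra. rewrite Rmax_right in Hy by lra. apply Hf; lra.
      * intros y Hy. rewrite Rmin_left in Hy by lra. rewrite Rmax_right in Hy by lra.
        unfold De. rewrite clamp_id; auto; lra.
    + unfold De. rewrite clamp_id; auto.
Qed.

Lemma RInt_const_R (a b c : R) : RInt (fun _ => c) a b = (b - a) * c.
Proof. rewrite RInt_const. reflexivity. Qed.

Lemma cont_mult (f g : R -> R) x : continuous f x -> continuous g x -> continuous (fun y => f y * g y) x.
Proof. intros. apply (continuous_mult (K:=R_AbsRing) f g x); auto. Qed.

Lemma cont_plus (f g : R -> R) x : continuous f x -> continuous g x -> continuous (fun y => f y + g y) x.
Proof. intros. apply (continuous_plus (K:=R_AbsRing) (V:=R_NormedModule) f g x); auto. Qed.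

Lemma cont_sq (f : R -> R) x : continuous f x -> continuous (fun y => f y ^ 2) x.
Proof. intros. apply (continuous_ext (fun y => f y * f y) (fun y => f y ^ 2) x). intros; simpl; ring. apply cont_mult; auto. Qed.

Lemma eqR (x y : R) : x = y -> x = y.
Proof. auto. Qed.

Definition u3 (M : R) := / (3 * M).
Definition wv (M k u : R) := k ^ 2 + u ^ 2 - 2 * M * u ^ 3.
Definition iw (M k v : R) := / wv M k (clamp 0 (u3 M) v).
Definition G (M k u : R) := RInt (iw M k) 0 u.

Lemma u3_pos M : 0 < M -> 0 < u3 M.
Proof. intros. unfold u3. apply Rinv_0_lt_compat. lra. Qed.

Lemma u3_prop M : 0 < M -> 3 * M * u3 M = 1.
Proof. intros. unfold u3. field. lra. Qed.

Lemma wv_bounds M k u : 0 < M -> 0 < k -> 0 <= u <= u3 M ->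
  k ^ 2 <= wv M k u <= k ^ 2 + u3 M ^ 2.
Proof.
  intros HM Hk Hu. assert (H3 := u3_prop M HM). unfold wv.
  assert (M * u <= M * u3 M) by (apply Rmult_le_compat_l; lra).
  assert (M * u <= 1/3) by lra.
  assert (0 <= u ^ 2) by (apply pow2_ge_0).
  assert (u ^ 3 = u * u ^ 2) by ring.
  assert (u ^ 2 <= u3 M ^ 2) by (apply pow_incr; lra).
  assert (0 <= (1/3 - M * u) * u ^ 2) by (apply Rmult_le_pos; lra).
  assert (0 <= M * u * u ^ 2) by (apply Rmult_le_pos; [apply Rmult_le_pos; lra| lra]).
  split. nra. nra.
Qed.

Lemma wv_pos M k u : 0 < M -> 0 < k -> 0 <= u <= u3 M -> 0 < wv M k u.
Proof. intros. assert (HH := wv_bounds M k u H H0 H1). assert (0 < k ^ 2) by (apply pow_lt; auto). lra. Qed.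

Lemma wv_mono M k u1 u2 : 0 < M -> 0 <= u1 -> u1 < u2 -> u2 <= u3 M -> wv M k u1 < wv M k u2.
Proof.
  intros HM H1 H2 H3. assert (H := u3_prop M HM). unfold wv.
  assert (M * u2 <= M * u3 M) by (apply Rmult_le_compat_l; lra).
  assert (M * u1 <= M * u3 M) by (apply Rmult_le_compat_l; lra).
  assert (Hd : u2 ^ 2 - 2 * M * u2 ^ 3 - (u1 ^ 2 - 2 * M * u1 ^ 3) =
     (u2 - u1) * ((u1 + u2) - 2 * M * (u1 * u1 + u1 * u2 + u2 * u2))) by ring.
  assert (0 < (u2 - u1) * ((u1 + u2) - 2 * M * (u1 * u1 + u1 * u2 + u2 * u2))).
  { apply Rmult_lt_0_compat. lra. nra. }
  lra.
Qed.

Lemma wv_cont M k u : 0 < M -> 0 < k -> 0 <= u <= u3 M -> continuous (fun v => / wv M k v) u.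
Proof.
  intros HM Hk Hu. apply (@ex_derive_continuous R_AbsRing R_NormedModule). unfold wv. auto_derive.
  assert (H := wv_pos M k u HM Hk Hu). unfold wv in H. lra.
Qed.

Lemma iw_cont M k : 0 < M -> 0 < k -> forall x, continuous (iw M k) x.
Proof.
  intros HM Hk x. unfold iw.
  apply (continuous_comp (clamp 0 (u3 M)) (fun v => / wv M k v)).
  apply (lip_cont _ 1). lra. apply clamp_lip. left; apply u3_pos; auto.
  apply wv_cont; auto. apply clamp_in. left; apply u3_pos; auto.
Qed.

Lemma iw_bounds M k x : 0 < M -> 0 < k -> / (k ^ 2 + u3 M ^ 2) <= iw M k x <= / k ^ 2.
Proof.
  intros HM Hk. unfold iw.
  assert (Hc := clamp_in 0 (u3 M) x (Rlt_le _ _ (u3_pos M HM))).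
  assert (Hb := wv_bounds M k _ HM Hk Hc).
  assert (0 < k ^ 2) by (apply pow_lt; auto).
  split; apply Rinv_le_contravar; lra.
Qed.

Lemma G_diff M k u1 u2 : 0 < M -> 0 < k -> u1 <= u2 ->
  / (k ^ 2 + u3 M ^ 2) * (u2 - u1) <= G M k u2 - G M k u1 <= / k ^ 2 * (u2 - u1).
Proof.
  intros HM Hk Hu. unfold G.
  assert (E : RInt (iw M k) 0 u2 - RInt (iw M k) 0 u1 = RInt (iw M k) u1 u2).
  { rewrite <- (RInt_Chasles (iw M k) 0 u1 u2) by (apply cont_exRInt; apply iw_cont; auto).
    unfold plus; simpl; ring. }
  rewrite E.
  assert (Hex : ex_RInt (iw M k) u1 u2) by (apply cont_exRInt; apply iw_cont; auto).
  split.
  - assert (H := RInt_le (fun _ => / (k ^ 2 + u3 M ^ 2)) (iw M k) u1 u2 Hu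
      (cont_exRInt _ _ _ (fun x => continuous_const _ x)) Hex (fun x _ => proj1 (iw_bounds M k x HM Hk))).
    rewrite RInt_const_R in H. rewrite Rmult_comm; lra.
  - assert (H := RInt_le (iw M k) (fun _ => / k ^ 2) u1 u2 Hu Hex
      (cont_exRInt _ _ _ (fun x => continuous_const _ x)) (fun x _ => proj2 (iw_bounds M k x HM Hk))).
    rewrite RInt_const_R in H. rewrite Rmult_comm; lra.
Qed.

Lemma G_0 M k : G M k 0 = 0.
Proof. unfold G. rewrite RInt_point. reflexivity. Qed.

Lemma G_inc M k u1 u2 : 0 < M -> 0 < k -> u1 < u2 -> G M k u1 < G M k u2.
Proof.
  intros HM Hk H. assert (H1 := G_diff M k u1 u2 HM Hk (Rlt_le _ _ H)).
  assert (0 < / (k ^ 2 + u3 M ^ 2)).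
  { apply Rinv_0_lt_compat. assert (0 < k ^ 2) by (apply pow_lt; auto). nra. }
  nra.
Qed.

Lemma G_lip M k : 0 < M -> 0 < k -> forall x y, Rabs (G M k x - G M k y) <= / k ^ 2 * Rabs (x - y).
Proof.
  intros HM Hk x y. assert (0 < / k ^ 2) by (apply Rinv_0_lt_compat; apply pow_lt; auto).
  assert (0 < / (k ^ 2 + u3 M ^ 2)).
  { apply Rinv_0_lt_compat. assert (0 < k ^ 2) by (apply pow_lt; auto). nra. }
  destruct (Rle_dec x y).
  - assert (Hd := G_diff M k x y HM Hk r).
    assert (0 <= / (k ^ 2 + u3 M ^ 2) * (y - x)) by (apply Rmult_le_pos; lra).
    rewrite Rabs_left1 by lra. rewrite Rabs_left1 by lra. lra.
  - assert (Hd := G_diff M k y x HM Hk (Rlt_le _ _ (Rnot_le_lt _ _ n))).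
    assert (0 <= / (k ^ 2 + u3 M ^ 2) * (x - y)) by (apply Rmult_le_pos; lra).
    rewrite Rabs_right by lra. rewrite Rabs_right by lra. lra.
Qed.

Lemma G_cont M k : 0 < M -> 0 < k -> forall x, continuous (G M k) x.
Proof.
  intros HM Hk. apply (lip_cont _ (/ k ^ 2)). apply Rinv_0_lt_compat; apply pow_lt; auto.
  apply G_lip; auto.
Qed.

Lemma G_derive M k x : 0 < M -> 0 < k -> is_derive (G M k) x (iw M k x).
Proof. intros. apply prim_derive. apply iw_cont; auto. Qed.

Definition ginv (M k y : R) := iota (fun z => 0 <= z <= u3 M /\ G M k z = clamp 0 (G M k (u3 M)) y).

Lemma G_inj M k z1 z2 : 0 < M -> 0 < k -> G M k z1 = G M k z2 -> z1 = z2.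
Proof.
  intros HM Hk H. destruct (Rtotal_order z1 z2) as [h|[h|h]]; auto.
  - apply (G_inc M k) in h; auto. lra.
  - apply (G_inc M k) in h; auto. lra.
Qed.

Lemma Gu3_pos M k : 0 < M -> 0 < k -> 0 < G M k (u3 M).
Proof. intros. rewrite <- (G_0 M k). apply G_inc; auto. apply u3_pos; auto. Qed.

Lemma ginv_spec M k y : 0 < M -> 0 < k ->
  0 <= ginv M k y <= u3 M /\ G M k (ginv M k y) = clamp 0 (G M k (u3 M)) y.
Proof.
  intros HM Hk. assert (Hu := u3_pos M HM). assert (Hg := Gu3_pos M k HM Hk).
  assert (Hc := clamp_in 0 (G M k (u3 M)) y (Rlt_le _ _ Hg)).
  destruct (IVT_gen_consistent (G M k) 0 (u3 M) (clamp 0 (G M k (u3 M)) y) (G_cont M k HM Hk))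
    as [z [Hz1 Hz2]].
  { rewrite G_0. rewrite Rmin_left by lra. rewrite Rmax_right by lra. auto. }
  rewrite Rmin_left in Hz1 by lra. rewrite Rmax_right in Hz1 by lra.
  unfold ginv. rewrite (iota_unique _ z).
  - split; auto.
  - intros z' [H1 H2]. apply (G_inj M k); auto. lra.
  - split; auto.
Qed.

Lemma ginv_G M k z : 0 < M -> 0 < k -> 0 <= z <= u3 M -> ginv M k (G M k z) = z.
Proof.
  intros HM Hk Hz. destruct (ginv_spec M k (G M k z) HM Hk) as [H1 H2].
  apply (G_inj M k); auto. rewrite H2. apply clamp_id.
  rewrite <- (G_0 M k). split.
  destruct (Req_dec z 0). subst; lra. left; apply G_inc; auto; lra.
  destruct (Req_dec z (u3 M)). subst; lra. left; apply G_inc; auto; lra.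
Qed.

Lemma ginv_lip M k : 0 < M -> 0 < k -> forall y1 y2,
  Rabs (ginv M k y1 - ginv M k y2) <= (k ^ 2 + u3 M ^ 2) * Rabs (y1 - y2).
Proof.
  intros HM Hk y1 y2. assert (Hg := Gu3_pos M k HM Hk).
  destruct (ginv_spec M k y1 HM Hk) as [_ E1]. destruct (ginv_spec M k y2 HM Hk) as [_ E2].
  assert (Hcl := clamp_lip 0 (G M k (u3 M)) (Rlt_le _ _ Hg) y1 y2).
  rewrite <- E1, <- E2 in Hcl.
  assert (Hk2 : 0 < k ^ 2) by (apply pow_lt; auto).
  assert (Hc : 0 < k ^ 2 + u3 M ^ 2) by nra.
  set (z1 := ginv M k y1) in *. set (z2 := ginv M k y2) in *.
  assert (Hlow : / (k ^ 2 + u3 M ^ 2) * Rabs (z1 - z2) <= Rabs (G M k z1 - G M k z2)).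
  { destruct (Rle_dec z1 z2).
    - assert (Hd := G_diff M k z1 z2 HM Hk r).
      assert (0 <= / (k ^ 2 + u3 M ^ 2) * (z2 - z1)) by (apply Rmult_le_pos; [left; apply Rinv_0_lt_compat; lra|lra]).
      rewrite Rabs_left1 by lra. rewrite Rabs_left1 by lra. lra.
    - assert (Hd := G_diff M k z2 z1 HM Hk (Rlt_le _ _ (Rnot_le_lt _ _ n))).
      assert (0 <= / (k ^ 2 + u3 M ^ 2) * (z1 - z2)) by (apply Rmult_le_pos; [left; apply Rinv_0_lt_compat; lra|lra]).
      rewrite Rabs_right by lra. rewrite Rabs_right by lra. lra. }
  assert (H3 : / (k ^ 2 + u3 M ^ 2) * Rabs (z1 - z2) <= Rabs (y1 - y2)) by lra.
  apply Rmult_le_compat_l with (r := k ^ 2 + u3 M ^ 2) in H3; [|lra].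
  rewrite <- Rmult_assoc, Rinv_r, Rmult_1_l in H3 by lra. exact H3.
Qed.

Lemma ginv_cont M k : 0 < M -> 0 < k -> forall y, continuous (ginv M k) y.
Proof.
  intros HM Hk. apply (lip_cont _ (k ^ 2 + u3 M ^ 2)).
  assert (0 < k ^ 2) by (apply pow_lt; auto). assert (0 <= u3 M ^ 2) by apply pow2_ge_0. lra.
  apply ginv_lip; auto.
Qed.

Definition Fst (M k s : R) := - G M k (/ s).
Definition dFst (M k s : R) := iw M k (/ s) * / s ^ 2.

Lemma Fst_derive M k s : 0 < M -> 0 < k -> 0 < s -> is_derive (Fst M k) s (dFst M k s).
Proof.
  intros HM Hk Hs.
  assert (Hi : is_derive (fun x => / x) s (- / s ^ 2)).
  { auto_derive. lra. field. lra. }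
  assert (H := is_derive_comp (G M k) (fun x => / x) s _ _ (G_derive M k (/ s) HM Hk) Hi).
  assert (H2 := is_derive_opp _ _ _ H).
  unfold Fst, dFst. replace (iw M k (/ s) * / s ^ 2) with (opp (scal (- / s ^ 2) (iw M k (/ s)))).
  exact H2.
  unfold scal, opp; simpl; unfold mult; simpl. field. lra.
Qed.

Lemma dFst_cont M k s : 0 < M -> 0 < k -> 0 < s -> continuous (dFst M k) s.
Proof.
  intros HM Hk Hs. unfold dFst.
  apply (continuous_mult (fun x => iw M k (/ x)) (fun x => / x ^ 2)).
  - apply (continuous_comp (fun x => / x) (iw M k)).
    + apply (@ex_derive_continuous R_AbsRing R_NormedModule). auto_derive. lra.
    + apply iw_cont; auto.
  - apply (@ex_derive_continuous R_AbsRing R_NormedModule). auto_derive. intro Hz. assert (0 < s * (s * 1)) by (apply Rmult_lt_0_compat; lra). lra.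
Qed.

Lemma Derive_Fst M k s : 0 < M -> 0 < k -> 0 < s -> Derive (Fst M k) s = dFst M k s.
Proof. intros. apply is_derive_unique. apply Fst_derive; auto. Qed.

Lemma Derive_Fst_cont M k s : 0 < M -> 0 < k -> 0 < s -> continuous (Derive (Fst M k)) s.
Proof.
  intros HM Hk Hs. apply (continuous_ext_loc (Derive (Fst M k)) (dFst M k)).
  - apply (locally_interval _ s 0 p_infty). simpl; auto. simpl; auto.
    intros y Hy _. simpl in Hy. symmetry. apply Derive_Fst; auto.
  - apply dFst_cont; auto.
Qed.

Lemma wv_Delta M k x : 0 < x -> wv M k (/ x) * x ^ 4 = Defs.Delta M k x.
Proof. intros. unfold wv, Defs.Delta. field. lra. Qed.

Lemma inv_in_range M x : 0 < M -> 3 * M <= x -> 0 < / x <= u3 M.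
Proof.
  intros HM Hx. split. apply Rinv_0_lt_compat; lra.
  unfold u3. apply Rinv_le_contravar; lra.
Qed.

Lemma dFst_h M k x : 0 < M -> 0 < k -> 3 * M <= x -> dFst M k x = x ^ 2 / Defs.Delta M k x.
Proof.
  intros HM Hk Hx. assert (Hr := inv_in_range M x HM Hx).
  unfold dFst, iw. rewrite clamp_id by lra.
  assert (Hw := wv_pos M k (/ x) HM Hk ltac:(lra)).
  rewrite <- (wv_Delta M k x) by lra.
  field. split; lra.
Qed.

Lemma rstar_eq M k r : 0 < M -> 0 < k -> 3 * M <= r -> rstar M k r = PI / 2 - G M k (/ r).
Proof.
  intros HM Hk Hr. unfold rstar. f_equal.
  apply is_RInt_gen_unique.
  assert (Hfp : forall P : R * R -> Prop, (forall x y, 3 * M <= x -> 3 * M < y -> P (x, y)) ->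
     filter_prod (at_point r) (Rbar_locally p_infty) P).
  { intros P HP. apply (Filter_prod _ _ _ (fun x => x = r) (fun y => 3 * M < y)).
    - reflexivity.
    - exists (3 * M). auto.
    - intros x y -> Hy. apply HP; auto. }
  assert (HI := is_RInt_gen_Derive (Fa := at_point r) (Fb := Rbar_locally p_infty) (Fst M k) (Fst M k r) 0).
  replace (G M k (/ r)) with (0 - Fst M k r) by (unfold Fst; ring).
  apply (is_RInt_gen_ext (Derive (Fst M k))).
  - apply Hfp. intros x y Hx Hy z Hz. simpl in Hz.
    assert (3 * M <= z). { assert (Rmin x y >= 3 * M). { unfold Rmin; destruct Rle_dec; lra. } lra. }
    rewrite Derive_Fst by lra. apply dFst_h; auto.
  - apply HI.
    + apply Hfp. intros x y Hx Hy z Hz. simpl in Hz.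
      assert (3 * M <= z). { assert (Rmin x y >= 3 * M). { unfold Rmin; destruct Rle_dec; lra. } lra. }
      exists (dFst M k z). apply Fst_derive; lra.
    + apply Hfp. intros x y Hx Hy z Hz. simpl in Hz.
      assert (3 * M <= z). { assert (Rmin x y >= 3 * M). { unfold Rmin; destruct Rle_dec; lra. } lra. }
      apply Derive_Fst_cont; lra.
    + intros P HP. unfold filtermap, at_point. apply (locally_singleton _ _ HP).
    + unfold Fst. apply (filterlim_comp _ _ _ (fun x => / x) (fun u => - G M k u) _ (locally 0)).
      * apply (filterlim_Rbar_inv p_infty). discriminate.
      * assert (Hc : continuous (fun u => - G M k u) 0).
        { apply (continuous_opp (G M k)). apply G_cont; auto. }
        unfold continuous in Hc. rewrite G_0, Ropp_0 in Hc. exact Hc.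
Qed.

Definition ue (M k x : R) := ginv M k (PI / 2 - x).

Lemma rstar3M_eq M k : 0 < M -> 0 < k -> rstar3M M k = PI / 2 - G M k (u3 M).
Proof. intros. unfold rstar3M. rewrite rstar_eq; auto. lra. Qed.

Lemma ue_spec M k x : 0 < M -> 0 < k -> rstar3M M k <= x <= PI / 2 ->
  0 <= ue M k x <= u3 M /\ G M k (ue M k x) = PI / 2 - x.
Proof.
  intros HM Hk Hx. rewrite rstar3M_eq in Hx; auto.
  destruct (ginv_spec M k (PI / 2 - x) HM Hk) as [H1 H2]. unfold ue. split; auto.
  rewrite H2. apply clamp_id. lra.
Qed.

Lemma ue_pos M k x : 0 < M -> 0 < k -> rstar3M M k <= x < PI / 2 -> 0 < ue M k x.
Proof.
  intros HM Hk Hx. destruct (ue_spec M k x HM Hk ltac:(lra)) as [[H1 H2] H3].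
  destruct H1 as [H1|H1]; auto. rewrite <- H1 in H3. rewrite G_0 in H3. lra.
Qed.

Lemma ue_mono M k x x' : 0 < M -> 0 < k -> rstar3M M k <= x -> x <= x' -> x' <= PI / 2 ->
  ue M k x' <= ue M k x.
Proof.
  intros HM Hk H1 H2 H3.
  destruct (ue_spec M k x HM Hk ltac:(lra)) as [_ E1].
  destruct (ue_spec M k x' HM Hk ltac:(lra)) as [_ E2].
  destruct (Rle_dec (ue M k x') (ue M k x)) as [h|h]; auto.
  apply Rnot_le_lt in h. apply (G_inc M k) in h; auto. lra.
Qed.

Lemma ue_smono M k x x' : 0 < M -> 0 < k -> rstar3M M k <= x -> x < x' -> x' <= PI / 2 ->
  ue M k x' < ue M k x.
Proof.
  intros HM Hk H1 H2 H3.
  destruct (ue_spec M k x HM Hk ltac:(lra)) as [_ E1].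
  destruct (ue_spec M k x' HM Hk ltac:(lra)) as [_ E2].
  assert (H := ue_mono M k x x' HM Hk H1 (Rlt_le _ _ H2) H3).
  destruct H as [H|H]; auto. rewrite H in E2. lra.
Qed.

Lemma r_of_eq M k x : 0 < M -> 0 < k -> rstar3M M k <= x < PI / 2 -> r_of M k x = / ue M k x.
Proof.
  intros HM Hk Hx. assert (Hp := ue_pos M k x HM Hk Hx).
  destruct (ue_spec M k x HM Hk ltac:(lra)) as [[H1 H2] H3].
  assert (Hr : 3 * M <= / ue M k x).
  { replace (3 * M) with (/ u3 M) by (unfold u3; field; lra). apply Rinv_le_contravar; lra. }
  unfold r_of. rewrite (iota_unique _ (/ ue M k x)). reflexivity.
  - intros y [Hy1 Hy2]. rewrite rstar_eq in Hy2 by auto.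
    assert (Hy3 := inv_in_range M y HM Hy1).
    assert (E : / y = ue M k x) by (apply (G_inj M k); auto; lra).
    rewrite <- E. rewrite Rinv_inv. reflexivity.
  - split; auto. rewrite rstar_eq by auto. rewrite Rinv_inv. lra.
Qed.

Lemma Vpot_eq M k l x : 0 < M -> 0 < k -> rstar3M M k <= x < PI / 2 ->
  Vpot M k l x = wv M k (ue M k x) * (Lam l - 6 * M * ue M k x).
Proof.
  intros HM Hk Hx. assert (Hp := ue_pos M k x HM Hk Hx).
  unfold Vpot, w. rewrite r_of_eq by auto.
  rewrite <- (wv_Delta M k (/ ue M k x)) by (apply Rinv_0_lt_compat; auto).
  rewrite Rinv_inv. field. lra.
Qed.

Definition Vc (M k : R) (l : nat) (x : R) := wv M k (ue M k x) * (Lam l - 6 * M * ue M k x).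

Lemma ue_cont M k : 0 < M -> 0 < k -> forall x, continuous (ue M k) x.
Proof.
  intros HM Hk x. unfold ue. apply (continuous_comp (fun x => PI / 2 - x) (ginv M k)).
  apply (@ex_derive_continuous R_AbsRing R_NormedModule). auto_derive. auto.
  apply ginv_cont; auto.
Qed.

Lemma Vc_cont M k l : 0 < M -> 0 < k -> forall x, continuous (Vc M k l) x.
Proof.
  intros HM Hk x. unfold Vc.
  apply (continuous_comp (ue M k) (fun u => wv M k u * (Lam l - 6 * M * u))).
  apply ue_cont; auto.
  apply (@ex_derive_continuous R_AbsRing R_NormedModule). unfold wv. auto_derive. auto.
Qed.

Lemma a_lt_b M k : 0 < M -> 0 < k -> rstar3M M k < PI / 2.
Proof. intros. rewrite rstar3M_eq; auto. assert (H1 := Gu3_pos M k H H0). lra. Qed.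

Lemma Lam_ge l : (2 <= l)%nat -> 6 <= Lam l /\ INR l <= Lam l /\ INR l ^ 2 <= Lam l.
Proof.
  intros Hl. unfold Lam. apply le_INR in Hl. simpl in Hl.
  split; [nra|split; nra].
Qed.

Lemma Vc_bounds M k l x : 0 < M -> 0 < k -> (2 <= l)%nat -> rstar3M M k <= x <= PI / 2 ->
  0 <= Vc M k l x <= Lam l * (k ^ 2 + u3 M ^ 2) /\
  wv M k (ue M k x) * (Lam l - 2) <= Vc M k l x.
Proof.
  intros HM Hk Hl Hx. destruct (ue_spec M k x HM Hk Hx) as [Hu _].
  assert (Hw := wv_bounds M k _ HM Hk Hu). assert (H3 := u3_prop M HM).
  destruct (Lam_ge l Hl) as [HL _].
  assert (0 < k ^ 2) by (apply pow_lt; auto).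
  assert (6 * M * ue M k x <= 2).
  { assert (M * ue M k x <= M * u3 M) by (apply Rmult_le_compat_l; lra). lra. }
  assert (0 <= 6 * M * ue M k x) by (assert (0 <= M * ue M k x) by (apply Rmult_le_pos; lra); lra).
  unfold Vc. split; [split|].
  - apply Rmult_le_pos; lra.
  - rewrite Rmult_comm. apply Rmult_le_compat; lra.
  - apply Rmult_le_compat_l; lra.
Qed.

Lemma num_eq M k l (psi dpsi : R -> R) : 0 < M -> 0 < k ->
  (forall x, is_derive psi x (dpsi x)) ->
  num_Q M k l psi = RInt (fun x => dpsi x ^ 2 + Vc M k l x * psi x ^ 2) (rstar3M M k) (PI / 2)
     + 6 * M * k ^ 2 / (Lam l - 2) * psi (PI / 2) ^ 2.
Proof.
  intros HM Hk Hd. unfold num_Q. f_equal. apply RInt_ext.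
  assert (Hab := a_lt_b M k HM Hk).
  intros x Hx. rewrite Rmin_left in Hx by lra. rewrite Rmax_right in Hx by lra.
  rewrite (is_derive_unique _ _ _ (Hd x)). rewrite Vpot_eq by (auto; lra). reflexivity.
Qed.

Lemma den_pos M k l (psi : R -> R) x0 : 0 < M -> 0 < k -> (2 <= l)%nat ->
  (forall x, continuous psi x) -> rstar3M M k <= x0 <= PI / 2 -> psi x0 <> 0 -> 0 < den_Q M k l psi.
Proof.
  intros HM Hk Hl Hc Hx0 Hn. unfold den_Q.
  assert (Hab := a_lt_b M k HM Hk).
  assert (H1 : 0 < RInt (fun x => psi x ^ 2) (rstar3M M k) (PI / 2)).
  { apply (RInt_pos _ _ _ x0); auto.
    intros x. apply (continuous_mult psi psi x (Hc x)) in Hc.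
    apply (continuous_ext (fun y => mult (psi y) (psi y))). intros; unfold mult; simpl; ring. exact Hc.
    assert (0 < psi x0 * psi x0) by (destruct (Rlt_or_le 0 (psi x0)); [nra|destruct H; nra]). 
    simpl; lra.
    intros; apply pow2_ge_0. }
  destruct (Lam_ge l Hl) as [HL _].
  assert (0 <= 12 * M / (Lam l * (Lam l - 2))).
  { apply Rmult_le_pos. lra. left. apply Rinv_0_lt_compat. nra. }
  assert (0 <= psi (PI / 2) ^ 2) by apply pow2_ge_0. nra.
Qed.

Lemma adm_of M k (psi dpsi : R -> R) x0 :
  (forall x, is_derive psi x (dpsi x)) -> (forall x, continuous dpsi x) ->
  psi (rstar3M M k) = 0 -> rstar3M M k <= x0 <= PI / 2 -> psi x0 <> 0 -> admissible M k psi.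
Proof.
  intros Hd Hc H0 Hx0 Hn. split; [|split; auto; exists x0; auto].
  intros x _. split. exists (dpsi x); auto.
  apply (continuous_ext dpsi). intros y; symmetry; apply is_derive_unique; auto. auto.
Qed.

Lemma lin_RInt (A B C : R -> R) t a b :
  (forall x, continuous A x) -> (forall x, continuous B x) -> (forall x, continuous C x) ->
  RInt (fun x => A x + t * B x + t ^ 2 * C x) a b = RInt A a b + t * RInt B a b + t ^ 2 * RInt C a b.
Proof.
  intros HA HB HC.
  assert (eA := cont_exRInt A a b HA). assert (eB := cont_exRInt B a b HB). assert (eC := cont_exRInt C a b HC).
  assert (eB' : ex_RInt (fun x => t * B x) a b) by (apply (ex_RInt_scal B a b t); auto).
  assert (eC' : ex_RInt (fun x => t ^ 2 * C x) a b) by (apply (ex_RInt_scal C a b (t ^ 2)); auto).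
  assert (eAB : ex_RInt (fun x => A x + t * B x) a b) by (apply (ex_RInt_plus A (fun x => t * B x)); auto).
  rewrite (RInt_plus (fun x => A x + t * B x) (fun x => t ^ 2 * C x)) by auto.
  rewrite (RInt_plus A (fun x => t * B x)) by auto.
  assert (E1 : RInt (fun x => t * B x) a b = t * RInt B a b) by (apply (RInt_scal B a b t); auto).
  assert (E2 : RInt (fun x => t ^ 2 * C x) a b = t ^ 2 * RInt C a b) by (apply (RInt_scal C a b (t ^ 2)); auto).
  unfold plus; simpl. unfold plus in E1, E2 |- *; simpl in *. rewrite <- E1, <- E2. reflexivity.
Qed.

Lemma quad_zero (B C T0 : R) : 0 < T0 -> (forall t, 0 < Rabs t < T0 -> 0 <= t * B + t ^ 2 * C) -> B = 0.
Proof.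
  intros HT H. destruct (Rtotal_order B 0) as [hB|[hB|hB]]; auto; exfalso.
  - set (s := Rmin (T0 / 2) (- B / (2 * (Rabs C + 1)))).
    assert (HC : 0 <= Rabs C) by apply Rabs_pos.
    assert (Hs1 : s <= T0 / 2) by apply Rmin_l.
    assert (Hs2 : s <= - B / (2 * (Rabs C + 1))) by apply Rmin_r.
    assert (Hs0 : 0 < s). { unfold s. apply Rmin_glb_lt. lra. apply Rdiv_lt_0_compat; lra. }
    assert (Hs3 : s * (2 * (Rabs C + 1)) <= - B).
    { apply Rmult_le_compat_r with (r := 2 * (Rabs C + 1)) in Hs2; [|lra].
      unfold Rdiv in Hs2. rewrite Rmult_assoc, Rinv_l, Rmult_1_r in Hs2 by lra. exact Hs2. }
    assert (HH := H s). rewrite Rabs_right in HH by lra. specialize (HH ltac:(lra)).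
    assert (C <= Rabs C) by apply Rle_abs.
    assert (s ^ 2 * C <= s * (s * Rabs C)) by (simpl; nra). nra.
  - set (s := Rmin (T0 / 2) (B / (2 * (Rabs C + 1)))).
    assert (HC : 0 <= Rabs C) by apply Rabs_pos.
    assert (Hs1 : s <= T0 / 2) by apply Rmin_l.
    assert (Hs2 : s <= B / (2 * (Rabs C + 1))) by apply Rmin_r.
    assert (Hs0 : 0 < s). { unfold s. apply Rmin_glb_lt. lra. apply Rdiv_lt_0_compat; lra. }
    assert (Hs3 : s * (2 * (Rabs C + 1)) <= B).
    { apply Rmult_le_compat_r with (r := 2 * (Rabs C + 1)) in Hs2; [|lra].
      unfold Rdiv in Hs2. rewrite Rmult_assoc, Rinv_l, Rmult_1_r in Hs2 by lra. exact Hs2. }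
    assert (HH := H (- s)). rewrite Rabs_left in HH by lra. specialize (HH ltac:(lra)).
    assert (C <= Rabs C) by apply Rle_abs.
    assert ((- s) ^ 2 * C <= s * (s * Rabs C)) by (simpl; nra). nra.
Qed.

Lemma wv_mono_le M k u1 u2 : 0 < M -> 0 <= u1 -> u1 <= u2 -> u2 <= u3 M -> wv M k u1 <= wv M k u2.
Proof.
  intros HM H1 H2 H3. destruct H2 as [H2|H2]. left; apply wv_mono; auto. subst; lra.
Qed.

Lemma pos_part_lip p : forall x y, Rabs (Rmax 0 (x - p) - Rmax 0 (y - p)) <= 1 * Rabs (x - y).
Proof.
  intros x y. rewrite Rmult_1_l. unfold Rmax.
  unfold Rabs at 2; destruct (Rcase_abs (x - y));
  apply Rabs_cases_le; repeat (destruct Rle_dec); lra.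
Qed.

Lemma lam_upper M k p : 0 < M -> 0 < k -> rstar3M M k < p < PI / 2 ->
  exists Cg, 0 <= Cg /\ forall l, (2 <= l)%nat -> forall f, is_QM_minimiser M k l f ->
    quotQ M k l f <= Lam l * wv M k (ue M k p) + Cg.
Proof.
  intros HM Hk Hp. set (a := rstar3M M k) in *. set (b := PI / 2) in *.
  set (gd := fun s => Rmax 0 (s - p) ^ 2).
  assert (Hgdc : forall x, continuous gd x).
  { intros x. unfold gd.
    assert (Hc : forall x, continuous (fun s => Rmax 0 (s - p)) x).
    { apply (lip_cont _ 1). lra. apply pos_part_lip. }
    apply cont_sq; auto. }
  set (g := fun x => RInt gd p x).
  assert (Hgd : forall x, is_derive g x (gd x)) by (apply prim_derive; auto).
  assert (Hgc : forall x, continuous g x).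
  { intros x. apply (@ex_derive_continuous R_AbsRing R_NormedModule). exists (gd x); auto. }
  assert (Hg0 : forall x, x <= p -> g x = 0).
  { intros x Hx. unfold g. rewrite (RInt_ext gd (fun _ => 0)). rewrite RInt_const_R. apply Rmult_0_r.
    intros y Hy. rewrite Rmin_right in Hy by lra. rewrite Rmax_left in Hy by lra.
    apply eqR. unfold gd. rewrite Rmax_left by lra. ring. }
  assert (Hgb : 0 < g b).
  { unfold g. apply (RInt_pos _ _ _ b); auto. lra. lra.
    unfold gd. rewrite Rmax_right by lra. apply pow_lt; lra.
    intros; unfold gd; apply pow2_ge_0. }
  assert (Hab := a_lt_b M k HM Hk).
  set (cg := RInt (fun x => g x ^ 2) a b).
  set (dg := RInt (fun x => gd x ^ 2) a b).
  assert (Hg2c : forall x, continuous (fun x => g x ^ 2) x).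
  { intros x. apply cont_sq; auto. }
  assert (Hgd2c : forall x, continuous (fun x => gd x ^ 2) x).
  { intros x. apply cont_sq; auto. }
  assert (Hcg : 0 < cg).
  { unfold cg. apply (RInt_pos _ _ _ b); auto. lra. apply pow_lt; lra. intros; apply pow2_ge_0. }
  assert (Hdg : 0 <= dg).
  { unfold dg. apply RInt_ge_0. lra. apply cont_exRInt; auto. intros; apply pow2_ge_0. }
  exists ((dg + 2 * M * k ^ 2 * g b ^ 2) / cg). split.
  { apply Rdiv_le_0_compat; auto. assert (0 <= k ^ 2) by apply pow2_ge_0.
    assert (0 <= g b ^ 2) by apply pow2_ge_0. assert (0 <= M * k ^ 2) by (apply Rmult_le_pos; lra).
    assert (0 <= M * k ^ 2 * g b ^ 2) by (apply Rmult_le_pos; lra). lra. }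
  intros l Hl f [_ Hmin].
  assert (Hadm : admissible M k g).
  { apply (adm_of M k g gd b); auto. apply Hg0. unfold a in *; lra. unfold a, b in *; lra. unfold a,b in *; lra. }
  apply Rle_trans with (1 := Hmin g Hadm).
  destruct (Lam_ge l Hl) as [HL _].
  set (wp := wv M k (ue M k p)).
  assert (Hnum : num_Q M k l g <= dg + Lam l * wp * cg + 2 * M * k ^ 2 * g b ^ 2).
  { rewrite (num_eq M k l g gd HM Hk Hgd). fold a b.
    assert (H1 : RInt (fun x => gd x ^ 2 + Vc M k l x * g x ^ 2) a b <=
                 RInt (fun x => gd x ^ 2 + (Lam l * wp) * g x ^ 2) a b).
    { apply RInt_le. lra.
      apply cont_exRInt. intros x. apply (cont_plus (fun x => gd x ^ 2) (fun x => Vc M k l x * g x ^ 2)).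
      auto. apply (cont_mult (Vc M k l) (fun x => g x ^ 2)). apply Vc_cont; auto. auto.
      apply cont_exRInt. intros x. apply (cont_plus (fun x => gd x ^ 2) (fun x => (Lam l * wp) * g x ^ 2)).
      auto. apply (cont_mult (fun _ => Lam l * wp) (fun x => g x ^ 2)). apply continuous_const. auto.
      intros x Hx. destruct (Rle_dec x p).
      - rewrite Hg0 by auto. lra.
      - assert (Hx' : rstar3M M k <= x <= PI / 2) by (unfold a, b in *; lra).
        destruct (ue_spec M k x HM Hk Hx') as [Hu _].
        assert (Hp' : rstar3M M k <= p <= PI / 2) by (unfold a, b in *; lra).
        destruct (ue_spec M k p HM Hk Hp') as [Hup _].
        assert (Hm : ue M k x <= ue M k p) by (apply ue_mono; auto; unfold a, b in *; lra).
        assert (Hw : wv M k (ue M k x) <= wp) by (apply wv_mono_le; auto; lra).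
        assert (Hw0 : 0 < wv M k (ue M k x)) by (apply wv_pos; auto).
        assert (H3 := u3_prop M HM).
        assert (6 * M * ue M k x <= 2).
        { assert (M * ue M k x <= M * u3 M) by (apply Rmult_le_compat_l; lra). lra. }
        assert (0 <= 6 * M * ue M k x) by (assert (0 <= M * ue M k x) by (apply Rmult_le_pos; lra); lra).
        assert (HV : Vc M k l x <= Lam l * wp).
        { unfold Vc. apply Rle_trans with (wp * (Lam l - 6 * M * ue M k x)).
          apply Rmult_le_compat_r; lra. rewrite Rmult_comm. apply Rmult_le_compat_r; lra. }
        assert (0 <= g x ^ 2) by apply pow2_ge_0. nra. }
    assert (H2 : RInt (fun x => gd x ^ 2 + (Lam l * wp) * g x ^ 2) a b = dg + Lam l * wp * cg).
    { assert (E := lin_RInt (fun x => gd x ^ 2) (fun x => g x ^ 2) (fun _ => 0) (Lam l * wp) a b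
                   Hgd2c Hg2c (fun x => continuous_const _ x)).
      rewrite RInt_const_R in E. unfold dg, cg. rewrite <- (Rplus_0_r (_ + _ * RInt _ a b)).
      replace 0 with ((Lam l * wp) ^ 2 * ((b - a) * 0)) by ring. rewrite <- E.
      apply RInt_ext. intros; apply eqR; ring. }
    assert (Hbeta : 6 * M * k ^ 2 / (Lam l - 2) <= 2 * M * k ^ 2).
    { assert (0 <= M * k ^ 2) by (apply Rmult_le_pos; [lra|apply pow2_ge_0]).
      unfold Rdiv. replace (6 * M * k ^ 2) with (6 * (M * k ^ 2)) by ring.
      assert (/ (Lam l - 2) <= / 4) by (apply Rinv_le_contravar; lra).
      assert (0 < / (Lam l - 2)) by (apply Rinv_0_lt_compat; lra). nra. }
    assert (0 <= g b ^ 2) by apply pow2_ge_0.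
    fold b. nra. }
  assert (Hnum0 : 0 <= num_Q M k l g).
  { rewrite (num_eq M k l g gd HM Hk Hgd). apply Rplus_le_le_0_compat.
    apply RInt_ge_0. lra.
    apply cont_exRInt. intros x. apply (cont_plus (fun x => gd x ^ 2) (fun x => Vc M k l x * g x ^ 2)).
    auto. apply (cont_mult (Vc M k l) (fun x => g x ^ 2)). apply Vc_cont; auto. auto.
    intros x Hx. destruct (Vc_bounds M k l x HM Hk Hl ltac:(lra)) as [[H0 _] _].
    assert (0 <= gd x ^ 2) by apply pow2_ge_0. assert (0 <= g x ^ 2) by apply pow2_ge_0. nra.
    apply Rmult_le_pos. apply Rmult_le_pos. assert (0 <= M * k ^ 2) by (apply Rmult_le_pos; [lra|apply pow2_ge_0]). nra.
    left; apply Rinv_0_lt_compat; lra. apply pow2_ge_0. }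
  assert (Hden : cg <= den_Q M k l g).
  { unfold den_Q. fold a b. fold cg.
    assert (0 <= 12 * M / (Lam l * (Lam l - 2))).
    { apply Rmult_le_pos. lra. left. apply Rinv_0_lt_compat. nra. }
    assert (0 <= g b ^ 2) by apply pow2_ge_0. nra. }
  unfold quotQ.
  apply Rle_trans with (num_Q M k l g / cg).
  { unfold Rdiv. apply Rmult_le_compat_l; auto. apply Rinv_le_contravar; auto. }
  apply Rle_trans with ((dg + Lam l * wp * cg + 2 * M * k ^ 2 * g b ^ 2) / cg).
  { unfold Rdiv. apply Rmult_le_compat_r; auto. left; apply Rinv_0_lt_compat; auto. }
  right. field. lra.
Qed.

Lemma cont_minus (f g : R -> R) x : continuous f x -> continuous g x -> continuous (fun y => f y - g y) x.
Proof.
  intros. apply (continuous_ext (fun y => f y + (-1) * g y) (fun y => f y - g y) x).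
  intros; simpl; ring. apply cont_plus; auto. apply cont_mult; auto. apply continuous_const.
Qed.

Ltac cont1 := match goal with
 | H : forall x, continuous ?f x |- continuous ?f _ => apply H
 | H : forall x, continuous ?f x |- continuous (fun y => ?f y) _ => apply H
 | |- continuous (fun y => _ + _) _ => apply cont_plus
 | |- continuous (fun y => _ - _) _ => apply cont_minus
 | |- continuous (fun y => _ ^ 2) _ => apply cont_sq
 | |- continuous (fun y => _ * _) _ => apply cont_mult
 | |- continuous (fun _ => _) _ => apply continuous_const
 end.
Ltac cont := repeat cont1.

Lemma der_mult (u v : R -> R) x du dv : is_derive u x du -> is_derive v x dv ->
  is_derive (fun y => u y * v y) x (du * v x + u x * dv).
Proof. intros. apply (is_derive_mult u v x du dv); auto. intros; apply Rmult_comm. Qed.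

Lemma der_plus (u v : R -> R) x du dv : is_derive u x du -> is_derive v x dv ->
  is_derive (fun y => u y + v y) x (du + dv).
Proof. intros. apply (is_derive_plus u v x du dv); auto. Qed.

Lemma der_const (c x : R) : is_derive (fun _ => c) x 0.
Proof. apply (is_derive_const c x). Qed.

Definition Ew (mu b x : R) := exp (2 * mu * (b - x)).

Lemma Ew_derive mu b x : is_derive (Ew mu b) x (-2 * mu * Ew mu b x).
Proof. unfold Ew. auto_derive. auto. apply eqR. unfold Rminus. ring. Qed.

Lemma Ew_cont mu b x : continuous (Ew mu b) x.
Proof. apply (@ex_derive_continuous R_AbsRing R_NormedModule). exists (-2 * mu * Ew mu b x). apply Ew_derive. Qed.

Lemma Ew_b mu b : Ew mu b b = 1.
Proof. unfold Ew. replace (2 * mu * (b - b)) with 0 by ring. apply exp_0. Qed.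

Lemma Ew_anti mu b x y : 0 <= mu -> x <= y -> Ew mu b y <= Ew mu b x.
Proof. intros. unfold Ew. assert (h : 2 * mu * (b - y) <= 2 * mu * (b - x)) by nra.
  destruct h as [h|h]. left; apply exp_increasing; auto. rewrite h; right; reflexivity. Qed.

Lemma Ew_pos mu b x : 0 < Ew mu b x.
Proof. apply exp_pos. Qed.

Lemma numden_comb M k l (psi dpsi : R -> R) lam : 0 < M -> 0 < k ->
  (forall x, is_derive psi x (dpsi x)) -> (forall x, continuous dpsi x) ->
  num_Q M k l psi - lam * den_Q M k l psi =
  RInt (fun x => dpsi x ^ 2 + (Vc M k l x - lam) * psi x ^ 2) (rstar3M M k) (PI / 2)
  + (6 * M * k ^ 2 / (Lam l - 2) - lam * (12 * M / (Lam l * (Lam l - 2)))) * psi (PI / 2) ^ 2.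
Proof.
  intros HM Hk Hd Hdc. rewrite (num_eq M k l psi dpsi HM Hk Hd). unfold den_Q.
  assert (Hc : forall x, continuous psi x).
  { intros x. apply (@ex_derive_continuous R_AbsRing R_NormedModule). exists (dpsi x); auto. }
  assert (HV := Vc_cont M k l HM Hk).
  assert (E := lin_RInt (fun x => dpsi x ^ 2 + Vc M k l x * psi x ^ 2) (fun x => psi x ^ 2) (fun _ => 0)
     (- lam) (rstar3M M k) (PI / 2)).
  rewrite RInt_const_R in E.
  rewrite (RInt_ext (fun x => dpsi x ^ 2 + (Vc M k l x - lam) * psi x ^ 2)
     (fun x => dpsi x ^ 2 + Vc M k l x * psi x ^ 2 + (- lam) * psi x ^ 2 + (- lam) ^ 2 * 0)).
  rewrite E. ring.
  all: try (intros; cont; fail).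
  intros; apply eqR; ring.
Qed.

Lemma RInt_lin2 (A B : R -> R) p q a b :
  (forall x, continuous A x) -> (forall x, continuous B x) ->
  RInt (fun x => p * A x + q * B x) a b = p * RInt A a b + q * RInt B a b.
Proof.
  intros HA HB.
  assert (E := lin_RInt (fun x => p * A x) (fun x => q * B x) (fun _ => 0) 1 a b).
  rewrite RInt_const_R in E.
  assert (eA := cont_exRInt A a b HA). assert (eB := cont_exRInt B a b HB).
  assert (E1 : RInt (fun x => p * A x) a b = p * RInt A a b) by (apply (RInt_scal A a b p); auto).
  assert (E2 : RInt (fun x => q * B x) a b = q * RInt B a b) by (apply (RInt_scal B a b q); auto).
  rewrite (RInt_ext (fun x => p * A x + q * B x) (fun x => p * A x + 1 * (q * B x) + 1 ^ 2 * 0)).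
  rewrite E. rewrite E1, E2. apply eqR. ring.
  all: try (intros; cont; fail).
  intros; apply eqR; ring.
Qed.

Lemma phi_derive (fe De E : R -> R) dE t x : is_derive fe x (De x) -> is_derive E x dE ->
  is_derive (fun y => fe y + t * ((E y - 1) * fe y)) x (De x + t * (dE * fe x + (E x - 1) * De x)).
Proof.
  intros H1 H2.
  assert (H3 : is_derive (fun y => E y - 1) x dE).
  { assert (h := is_derive_minus E (fun _ => 1) x dE 0 H2 (der_const 1 x)).
    replace dE with (minus dE 0) by (unfold minus, plus, opp; simpl; ring). exact h. }
  assert (H4 := der_mult _ _ x _ _ H3 H1).
  assert (H5 := is_derive_scal _ x t _ H4).
  apply (der_plus fe _ x _ _ H1 H5).
Qed.

Lemma core M k l f r0 x1 mu c K2 :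
  0 < M -> 0 < k -> (2 <= l)%nat -> is_QM_minimiser M k l f ->
  rstar3M M k < r0 -> r0 < x1 -> x1 < PI / 2 ->
  0 < mu -> 0 < c -> c <= 1/2 -> 0 <= K2 ->
  (forall x, rstar3M M k <= x <= x1 -> c * Lam l <= Vc M k l x - quotQ M k l f - 2 * mu ^ 2) ->
  quotQ M k l f + 2 * mu ^ 2 <= K2 * Lam l ->
  RInt (energy l f) (rstar3M M k) r0 <=
    (1 + (k ^ 2 + u3 M ^ 2) + K2) / c * exp (- (2 * mu * (x1 - r0))) * RInt (energy l f) (rstar3M M k) (PI / 2).
Proof.
  intros HM Hk Hl Hmin' Hr0 Hr1 Hx1 Hmu Hc Hc2 HK2 Hlow Hup.
  assert (Hab := a_lt_b M k HM Hk).
  destruct Hmin' as [[Hf1 [Hfa [x0 [Hx0 Hfx0]]]] Hmin].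
  destruct (C1_ext f (rstar3M M k) (PI / 2) ltac:(lra) Hf1) as [fe [De [Hfe [HDe Hag]]]].
  assert (Hfec : forall x, continuous fe x).
  { intros x. apply (@ex_derive_continuous R_AbsRing R_NormedModule). exists (De x); auto. }
  assert (HV := Vc_cont M k l HM Hk).
  destruct (Lam_ge l Hl) as [HL [HL1 HL2]].
  set (lam := quotQ M k l f) in *.
  set (beta := 6 * M * k ^ 2 / (Lam l - 2)).
  set (gam := 12 * M / (Lam l * (Lam l - 2))).
  assert (Hnum : num_Q M k l f = num_Q M k l fe).
  { unfold num_Q. f_equal.
    - apply RInt_ext. intros x Hx. rewrite Rmin_left in Hx by lra. rewrite Rmax_right in Hx by lra.
      destruct (Hag x ltac:(lra)) as [E1 E2].
      rewrite (is_derive_unique fe x (De x) (Hfe x)). rewrite E2, E1. reflexivity.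
    - destruct (Hag (PI / 2) ltac:(lra)) as [E1 _]. rewrite E1. reflexivity. }
  assert (Hden : den_Q M k l f = den_Q M k l fe).
  { unfold den_Q. f_equal.
    - apply RInt_ext. intros x Hx. rewrite Rmin_left in Hx by lra. rewrite Rmax_right in Hx by lra.
      destruct (Hag x ltac:(lra)) as [E1 E2]. rewrite E1. reflexivity.
    - destruct (Hag (PI / 2) ltac:(lra)) as [E1 _]. rewrite E1. reflexivity. }
  assert (Hfex0 : fe x0 <> 0) by (destruct (Hag x0 Hx0) as [E1 _]; rewrite E1; auto).
  assert (HD0 : 0 < den_Q M k l fe) by (apply (den_pos M k l fe x0); auto).
  assert (Hlam : lam = num_Q M k l fe / den_Q M k l fe) by (unfold lam, quotQ; rewrite Hnum, Hden; reflexivity).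
  assert (HN0 : num_Q M k l fe - lam * den_Q M k l fe = 0) by (rewrite Hlam; field; lra).
  assert (Hnn : 0 <= num_Q M k l fe).
  { rewrite (num_eq M k l fe De HM Hk Hfe). apply Rplus_le_le_0_compat.
    apply RInt_ge_0. lra. apply cont_exRInt. intros; cont.
    intros x Hx. destruct (Vc_bounds M k l x HM Hk Hl ltac:(lra)) as [[H0 _] _].
    assert (0 <= De x ^ 2) by apply pow2_ge_0. assert (0 <= fe x ^ 2) by apply pow2_ge_0. nra.
    apply Rmult_le_pos. apply Rmult_le_pos. assert (0 <= M * k ^ 2) by (apply Rmult_le_pos; [lra|apply pow2_ge_0]). nra.
    left; apply Rinv_0_lt_compat; lra. apply pow2_ge_0. }
  assert (Hlam0 : 0 <= lam) by (rewrite Hlam; apply Rdiv_le_0_compat; auto).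
  set (E := Ew mu (PI / 2)).
  assert (HEc : forall x, continuous E x) by (intros; apply Ew_cont).
  set (Phi := fun x => E x * (De x ^ 2 - 2 * mu * fe x * De x + (Vc M k l x - lam) * fe x ^ 2)).
  set (Psi := fun x => De x ^ 2 + (Vc M k l x - lam) * fe x ^ 2).
  assert (HPhic : forall x, continuous Phi x) by (intros; unfold Phi; cont).
  assert (HPsic : forall x, continuous Psi x) by (intros; unfold Psi; cont).
  assert (HR0 : RInt Psi (rstar3M M k) (PI / 2) + (beta - lam * gam) * fe (PI / 2) ^ 2 = 0).
  { rewrite <- HN0. rewrite (numden_comb M k l fe De lam HM Hk Hfe HDe). reflexivity. }
  assert (HEa : 1 <= E (rstar3M M k)).
  { rewrite <- (Ew_b mu (PI / 2)). apply Ew_anti; lra. }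
  assert (HEL : RInt Phi (rstar3M M k) (PI / 2) = RInt Psi (rstar3M M k) (PI / 2)).
  { set (Q2 := fun y => (-2 * mu * E y * fe y + (E y - 1) * De y) ^ 2 + (Vc M k l y - lam) * ((E y - 1) * fe y) ^ 2).
    assert (HQ2c : forall x, continuous Q2 x) by (intros; unfold Q2; cont).
    assert (HB : RInt (fun y => 2 * (Phi y - Psi y)) (rstar3M M k) (PI / 2) = 0).
    { apply (quad_zero _ (RInt Q2 (rstar3M M k) (PI / 2)) (/ E (rstar3M M k))).
      apply Rinv_0_lt_compat; lra.
      intros t Ht.
      set (phi := fun y => fe y + t * ((E y - 1) * fe y)).
      set (dphi := fun y => De y + t * (-2 * mu * E y * fe y + (E y - 1) * De y)).
      assert (Hd : forall y, is_derive phi y (dphi y)).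
      { intros y. apply (phi_derive fe De E (-2 * mu * E y) t y (Hfe y) (Ew_derive mu (PI / 2) y)). }
      assert (Hdc : forall y, continuous dphi y) by (intros; unfold dphi; cont).
      assert (Hphic : forall y, continuous phi y).
      { intros y. apply (@ex_derive_continuous R_AbsRing R_NormedModule). exists (dphi y); auto. }
      assert (Hfac : 0 < 1 + t * (E x0 - 1)).
      { assert (HE1 : E x0 <= E (rstar3M M k)) by (apply Ew_anti; lra).
        assert (HE2 : 1 <= E x0) by (rewrite <- (Ew_b mu (PI / 2)); apply Ew_anti; lra).
        assert (Rabs t * E (rstar3M M k) < 1).
        { destruct Ht as [_ Ht]. apply Rmult_lt_compat_r with (r := E (rstar3M M k)) in Ht; [|lra].
          rewrite Rinv_l in Ht by lra. lra. }
        assert (Rabs (t * (E x0 - 1)) < 1).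
        { rewrite Rabs_mult. rewrite (Rabs_right (E x0 - 1)) by lra.
          assert (0 <= Rabs t) by apply Rabs_pos. nra. }
        apply Rabs_lt_between in H0. lra. }
      assert (Hphix0 : phi x0 <> 0).
      { unfold phi. replace (fe x0 + t * ((E x0 - 1) * fe x0)) with (fe x0 * (1 + t * (E x0 - 1))) by ring.
        apply Rmult_integral_contrapositive; split; lra. }
      assert (Hadm : admissible M k phi).
      { apply (adm_of M k phi dphi x0); auto.
        unfold phi. destruct (Hag (rstar3M M k) ltac:(lra)) as [E1 _]. rewrite E1, Hfa. ring. }
      assert (Hq := Hmin phi Hadm). fold lam in Hq.
      assert (HDp : 0 < den_Q M k l phi) by (apply (den_pos M k l phi x0); auto).
      assert (Hge : 0 <= num_Q M k l phi - lam * den_Q M k l phi).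
      { unfold quotQ in Hq. apply Rmult_le_compat_r with (r := den_Q M k l phi) in Hq; [|lra].
        unfold Rdiv in Hq. rewrite Rmult_assoc, Rinv_l, Rmult_1_r in Hq by lra. lra. }
      rewrite (numden_comb M k l phi dphi lam HM Hk Hd Hdc) in Hge.
      assert (Hpb : phi (PI / 2) = fe (PI / 2)).
      { unfold phi. unfold E. rewrite Ew_b. ring. }
      rewrite Hpb in Hge.
      rewrite (RInt_ext _ (fun y => Psi y + t * (2 * (Phi y - Psi y)) + t ^ 2 * Q2 y)) in Hge.
      rewrite lin_RInt in Hge; auto.
      fold beta gam in Hge. lra.
      intros; cont.
      intros y _. apply eqR. unfold Psi, Phi, Q2, phi, dphi. ring. }
    rewrite (RInt_ext (fun y => 2 * (Phi y - Psi y)) (fun y => 2 * Phi y + -2 * Psi y)) in HB.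
    rewrite (RInt_lin2 Phi Psi 2 (-2)) in HB by auto. lra.
    intros; apply eqR; ring. }
  set (en := fun x => De x ^ 2 + Lam l * fe x ^ 2).
  assert (Henc : forall x, continuous en x) by (intros; unfold en; cont).
  assert (Hfe2c : forall x, continuous (fun x => fe x ^ 2) x) by (intros; cont).
  assert (HDe2c : forall x, continuous (fun x => De x ^ 2) x) by (intros; cont).
  assert (Hen : forall y z, rstar3M M k <= y -> z <= PI / 2 -> y <= z ->
     RInt (energy l f) y z = RInt en y z).
  { intros y z H1 H2 H3. apply RInt_ext. intros x Hx. rewrite Rmin_left in Hx by lra. rewrite Rmax_right in Hx by lra.
    destruct (Hag x ltac:(lra)) as [E1 E2]. unfold energy, en. rewrite E1, E2. reflexivity. }
  rewrite (Hen (rstar3M M k) r0 (Rle_refl _) ltac:(lra) ltac:(lra)).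
  rewrite (Hen (rstar3M M k) (PI / 2) (Rle_refl _) (Rle_refl _) ltac:(lra)).
  set (W := k ^ 2 + u3 M ^ 2).
  assert (HW : 0 <= W) by (unfold W; assert (0 <= k ^ 2) by apply pow2_ge_0; assert (0 <= u3 M ^ 2) by apply pow2_ge_0; lra).
  set (If := RInt en (rstar3M M k) (PI / 2)).
  set (I0 := RInt en (rstar3M M k) r0).
  assert (HIf : 0 <= If).
  { apply RInt_ge_0. lra. apply cont_exRInt; auto. intros x _. unfold en.
    assert (0 <= De x ^ 2) by apply pow2_ge_0. assert (0 <= fe x ^ 2) by apply pow2_ge_0. nra. }
  assert (Hpt1 : forall x, rstar3M M k <= x <= x1 -> c * E x * en x <= Phi x).
  { intros x Hx. assert (Hv := Hlow x Hx). unfold Phi, en.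
    assert (He : 0 < E x) by apply Ew_pos.
    set (d := De x) in *. set (g := fe x) in *. set (v := Vc M k l x - lam) in *.
    assert (X : 0 <= (1 - c - 1/2) * d ^ 2) by (apply Rmult_le_pos; [lra|apply pow2_ge_0]).
    assert (Y : 0 <= (v - c * Lam l - 2 * mu ^ 2) * g ^ 2) by (apply Rmult_le_pos; [lra|apply pow2_ge_0]).
    assert (Z : 0 <= (d - 2 * mu * g) ^ 2) by apply pow2_ge_0.
    assert (S : 0 <= d ^ 2 - 2 * mu * g * d + v * g ^ 2 - c * (d ^ 2 + Lam l * g ^ 2)) by nra.
    nra. }
  assert (Hpt2 : forall x, x1 <= x <= PI / 2 -> - (K2 * Lam l * E x1) * fe x ^ 2 <= Phi x).
  { intros x Hx. unfold Phi.
    assert (He : 0 < E x) by apply Ew_pos.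
    assert (HEx : E x <= E x1) by (apply Ew_anti; lra).
    destruct (Vc_bounds M k l x HM Hk Hl ltac:(lra)) as [[HV0 _] _].
    set (d := De x) in *. set (g := fe x) in *.
    assert (Z : 0 <= (d - 2 * mu * g) ^ 2) by apply pow2_ge_0.
    assert (G2 : 0 <= g ^ 2) by apply pow2_ge_0.
    assert (S : - (K2 * Lam l) * g ^ 2 <= d ^ 2 - 2 * mu * g * d + (Vc M k l x - lam) * g ^ 2).
    { assert (0 <= (Vc M k l x - lam + K2 * Lam l - 2 * mu ^ 2) * g ^ 2) by (apply Rmult_le_pos; lra). nra. }
    assert (0 <= K2 * Lam l * g ^ 2) by (apply Rmult_le_pos; [apply Rmult_le_pos; lra|lra]).
    nra. }
  assert (HPsi : RInt Psi (rstar3M M k) (PI / 2) <= (1 + W) * If).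
  { unfold If. rewrite <- (RInt_scal en _ _ (1 + W)) by (apply cont_exRInt; auto).
    apply RInt_le. lra. apply cont_exRInt; auto.
    apply (cont_exRInt (fun x => scal (1 + W) (en x))). intros; unfold scal; simpl; unfold mult; simpl; cont.
    intros x Hx. unfold Psi, en, scal; simpl; unfold mult; simpl.
    destruct (Vc_bounds M k l x HM Hk Hl ltac:(lra)) as [[_ HV1] _]. fold W in HV1.
    assert (0 <= De x ^ 2) by apply pow2_ge_0. assert (G2 : 0 <= fe x ^ 2) by apply pow2_ge_0.
    assert ((Vc M k l x - lam) * fe x ^ 2 <= Lam l * W * fe x ^ 2) by (apply Rmult_le_compat_r; lra).
    assert (0 <= W * De x ^ 2) by (apply Rmult_le_pos; lra).
    assert (0 <= Lam l * fe x ^ 2) by (apply Rmult_le_pos; lra). nra. }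
  assert (exPhi : forall y z, ex_RInt Phi y z) by (intros; apply cont_exRInt; auto).
  assert (Hsplit : RInt Phi (rstar3M M k) (PI / 2) =
     RInt Phi (rstar3M M k) r0 + RInt Phi r0 x1 + RInt Phi x1 (PI / 2)).
  { rewrite <- (RInt_Chasles Phi (rstar3M M k) r0 (PI / 2)) by auto.
    rewrite <- (RInt_Chasles Phi r0 x1 (PI / 2)) by auto. unfold plus; simpl. ring. }
  assert (HEr0 : 0 < E r0) by apply Ew_pos.
  assert (HEx1 : 1 <= E x1) by (rewrite <- (Ew_b mu (PI / 2)); apply Ew_anti; lra).
  assert (HP1 : c * E r0 * I0 <= RInt Phi (rstar3M M k) r0).
  { unfold I0. rewrite <- (RInt_scal en _ _ (c * E r0)) by (apply cont_exRInt; auto).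
    apply RInt_le. lra.
    apply (cont_exRInt (fun x => scal (c * E r0) (en x))). intros; unfold scal; simpl; unfold mult; simpl; cont.
    auto.
    intros x Hx. unfold scal; simpl; unfold mult; simpl.
    assert (H1 := Hpt1 x ltac:(lra)).
    assert (H2 : E r0 <= E x) by (apply Ew_anti; lra).
    assert (H3 : 0 <= en x).
    { unfold en. assert (0 <= De x ^ 2) by apply pow2_ge_0. assert (0 <= fe x ^ 2) by apply pow2_ge_0. nra. }
    assert (c * E r0 * en x <= c * E x * en x).
    { apply Rmult_le_compat_r; auto. apply Rmult_le_compat_l; lra. }
    lra. }
  assert (HP2 : 0 <= RInt Phi r0 x1).
  { apply RInt_ge_0. lra. auto. intros x Hx.
    assert (H1 := Hpt1 x ltac:(lra)).
    assert (H3 : 0 <= en x).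
    { unfold en. assert (0 <= De x ^ 2) by apply pow2_ge_0. assert (0 <= fe x ^ 2) by apply pow2_ge_0. nra. }
    assert (0 < E x) by apply Ew_pos.
    assert (0 <= c * E x * en x) by (apply Rmult_le_pos; [apply Rmult_le_pos; lra|lra]). lra. }
  set (F1 := RInt (fun x => fe x ^ 2) x1 (PI / 2)).
  set (F := RInt (fun x => fe x ^ 2) (rstar3M M k) (PI / 2)).
  assert (HP3 : - (K2 * Lam l * E x1) * F1 <= RInt Phi x1 (PI / 2)).
  { unfold F1. rewrite <- (RInt_scal (fun x => fe x ^ 2) _ _ (- (K2 * Lam l * E x1))) by (apply cont_exRInt; auto).
    apply RInt_le. lra.
    apply (cont_exRInt (fun x => scal (- (K2 * Lam l * E x1)) (fe x ^ 2))). intros; unfold scal; simpl; unfold mult; simpl; cont.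
    auto.
    intros x Hx. unfold scal; simpl; unfold mult; simpl. apply Hpt2; lra. }
  assert (HF1 : F1 <= F).
  { unfold F, F1. rewrite <- (RInt_Chasles (fun x => fe x ^ 2) (rstar3M M k) x1 (PI / 2)) by (apply cont_exRInt; auto).
    assert (0 <= RInt (fun x => fe x ^ 2) (rstar3M M k) x1).
    { apply RInt_ge_0. lra. apply cont_exRInt; auto. intros; apply pow2_ge_0. }
    unfold plus; simpl in *. lra. }
  assert (HF1p : 0 <= F1).
  { unfold F1. apply RInt_ge_0. lra. apply cont_exRInt; auto. intros; apply pow2_ge_0. }
  assert (HIfL : Lam l * F <= If).
  { unfold If, F. rewrite (RInt_ext en (fun x => 1 * De x ^ 2 + Lam l * fe x ^ 2)).
    rewrite RInt_lin2 by auto.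
    assert (0 <= RInt (fun x => De x ^ 2) (rstar3M M k) (PI / 2)).
    { apply RInt_ge_0. lra. apply cont_exRInt; auto. intros; apply pow2_ge_0. }
    lra.
    intros; unfold en; apply eqR; ring. }
  assert (HE : E x1 = E r0 * exp (- (2 * mu * (x1 - r0)))).
  { unfold E, Ew. rewrite <- exp_plus. f_equal. ring. }
  assert (Hmain : c * E r0 * I0 <= (1 + W + K2) * E x1 * If).
  { assert (A1 : K2 * Lam l * E x1 * F1 <= K2 * E x1 * If).
    { assert (0 <= K2 * E x1) by (apply Rmult_le_pos; lra).
      assert (Lam l * F1 <= If) by (assert (Lam l * F1 <= Lam l * F) by (apply Rmult_le_compat_l; lra); lra).
      replace (K2 * Lam l * E x1 * F1) with ((K2 * E x1) * (Lam l * F1)) by ring.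
      apply Rmult_le_compat_l; auto. }
    assert (A2 : (1 + W) * If <= (1 + W) * E x1 * If).
    { rewrite Rmult_assoc. apply Rmult_le_compat_l. lra.
      replace If with (1 * If) at 1 by ring. apply Rmult_le_compat_r; lra. }
    assert (A3 : RInt Phi (rstar3M M k) (PI / 2) <= (1 + W) * If) by (rewrite HEL; auto).
    replace ((1 + W + K2) * E x1 * If) with ((1 + W) * E x1 * If + K2 * E x1 * If) by ring.
    assert (- (K2 * Lam l * E x1) * F1 = - (K2 * Lam l * E x1 * F1)) by ring.
    lra. }
  rewrite HE in Hmain.
  apply (Rmult_le_reg_l (c * E r0)). apply Rmult_lt_0_compat; lra.
  apply Rle_trans with (1 := Hmain). right. field. lra.
Qed.
Theorem lemma4p13 (M k r0 : R) :
  0 < M -> 0 < k -> rstar3M M k < r0 < PI / 2 ->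
  exists C : R, 0 < C /\
  exists l0 : nat, forall l : nat, (l0 <= l)%nat -> (2 <= l)%nat ->
  forall RQM : R -> R, is_QM_minimiser M k l RQM ->
    RInt (energy l RQM) (rstar3M M k) r0
    <= C * exp (- (INR l) / C) * RInt (energy l RQM) (rstar3M M k) (PI / 2).
Proof.
  intros HM Hk [Hr0a Hr0b].
  assert (Hab := a_lt_b M k HM Hk).
  set (x1 := (r0 + PI / 2) / 2). set (p := (x1 + PI / 2) / 2).
  assert (Hx1 : r0 < x1 < PI / 2) by (unfold x1; lra).
  assert (Hp : x1 < p < PI / 2) by (unfold p; lra).
  destruct (lam_upper M k p HM Hk ltac:(lra)) as [Cg [HCg Hupper]].
  destruct (ue_spec M k x1 HM Hk ltac:(lra)) as [Hu1 _].
  destruct (ue_spec M k p HM Hk ltac:(lra)) as [Hup _].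
  set (u1 := ue M k x1) in *. set (up := ue M k p) in *.
  assert (Hlt : up < u1) by (apply ue_smono; lra).
  set (Dw := wv M k u1 - wv M k up).
  assert (HDw : 0 < Dw) by (unfold Dw; assert (h := wv_mono M k up u1 HM ltac:(lra) Hlt ltac:(lra)); lra).
  set (W := k ^ 2 + u3 M ^ 2).
  assert (Hwu1 := wv_bounds M k u1 HM Hk Hu1). assert (Hwup := wv_bounds M k up HM Hk Hup).
  fold W in Hwu1, Hwup.
  assert (Hk2 : 0 < k ^ 2) by (apply pow_lt; auto).
  assert (HW : 0 <= W) by (unfold W; assert (0 <= u3 M ^ 2) by apply pow2_ge_0; lra).
  set (m := Rmin (1/2) (Dw / 8)).
  assert (Hm1 : m <= 1/2) by apply Rmin_l. assert (Hm2 : m <= Dw / 8) by apply Rmin_r.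
  assert (Hm0 : 0 < m) by (unfold m; apply Rmin_glb_lt; lra).
  set (c := Rmin (1/2) (Dw / 4)).
  assert (Hc1 : c <= 1/2) by apply Rmin_l. assert (Hc2 : c <= Dw / 4) by apply Rmin_r.
  assert (Hc0 : 0 < c) by (unfold c; apply Rmin_glb_lt; lra).
  set (K2 := W + Cg + 1).
  set (A := (1 + W + K2) / c).
  assert (HA : 0 < A) by (unfold A, K2; apply Rdiv_lt_0_compat; lra).
  assert (Hd0 : 0 < 2 * m * (x1 - r0)) by (apply Rmult_lt_0_compat; lra).
  set (C := Rmax A (/ (2 * m * (x1 - r0)))).
  assert (HCA : A <= C) by apply Rmax_l.
  assert (HCd : / (2 * m * (x1 - r0)) <= C) by apply Rmax_r.
  assert (HC0 : 0 < C) by lra.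
  exists C. split; auto.
  destruct (INR_unbounded (2 * (2 * W + Cg) / Dw)) as [l0 Hl0].
  exists l0. intros l Hll0 Hl2 RQM Hmin.
  destruct (Lam_ge l Hl2) as [HL [HL1 HL2]].
  assert (Hl0l : INR l0 <= INR l) by (apply le_INR; auto).
  assert (HLbig : 2 * (2 * W + Cg) < Lam l * Dw).
  { assert (H := Hl0). apply Rgt_lt in H.
    assert (2 * (2 * W + Cg) / Dw < Lam l) by lra.
    apply Rmult_lt_compat_r with (r := Dw) in H0; auto.
    unfold Rdiv in H0. rewrite Rmult_assoc, Rinv_l, Rmult_1_r in H0 by lra. lra. }
  assert (Hlpos : 2 <= INR l) by (apply le_INR in Hl2; simpl in Hl2; lra).
  set (mu := m * INR l).
  assert (Hmu0 : 0 < mu) by (unfold mu; apply Rmult_lt_0_compat; lra).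
  assert (Hmu2 : 2 * mu ^ 2 <= m * Lam l).
  { unfold mu. replace (2 * (m * INR l) ^ 2) with ((2 * m) * m * INR l ^ 2) by ring.
    assert (2 * m * m <= m) by nra.
    assert (0 <= INR l ^ 2) by apply pow2_ge_0.
    apply Rle_trans with (m * INR l ^ 2). apply Rmult_le_compat_r; auto.
    apply Rmult_le_compat_l; lra. }
  assert (Hq := Hupper l Hl2 RQM Hmin).
  assert (Hcore := core M k l RQM r0 x1 mu c K2 HM Hk Hl2 Hmin Hr0a (proj1 Hx1) (proj2 Hx1) Hmu0 Hc0 Hc1
    ltac:(unfold K2; lra)).
  assert (Hif : 0 <= RInt (energy l RQM) (rstar3M M k) (PI / 2)).
  { destruct Hmin as [[Hf1 _] _]. apply RInt_ge_0. lra.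
    apply (@ex_RInt_continuous R_CompleteNormedModule). intros z Hz.
    rewrite Rmin_left in Hz by lra. rewrite Rmax_right in Hz by lra.
    destruct (Hf1 z Hz) as [Hd Hdc]. unfold energy.
    apply cont_plus. apply cont_sq; auto. apply cont_mult. apply continuous_const.
    apply cont_sq. apply (@ex_derive_continuous R_AbsRing R_NormedModule); auto.
    intros x _. unfold energy. assert (0 <= Derive RQM x ^ 2) by apply pow2_ge_0.
    assert (0 <= RQM x ^ 2) by apply pow2_ge_0. nra. }
  eapply Rle_trans. apply Hcore.
  - intros x Hx. destruct (Vc_bounds M k l x HM Hk Hl2 ltac:(lra)) as [_ HV].
    destruct (ue_spec M k x HM Hk ltac:(lra)) as [Hux _].
    assert (Hm' : u1 <= ue M k x) by (apply ue_mono; lra).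
    assert (Hw : wv M k u1 <= wv M k (ue M k x)) by (apply wv_mono_le; auto; lra).
    assert (H1 : wv M k u1 * (Lam l - 2) <= Vc M k l x).
    { apply Rle_trans with (2 := HV). apply Rmult_le_compat_r; lra. }
    assert (H2 : c * Lam l <= Dw / 4 * Lam l) by (apply Rmult_le_compat_r; lra).
    assert (H3 : m * Lam l <= Dw / 8 * Lam l) by (apply Rmult_le_compat_r; lra).
    unfold Dw in *. lra.
  - assert (H1 : Lam l * wv M k up <= Lam l * W) by (apply Rmult_le_compat_l; lra).
    assert (H2 : Cg <= Cg * Lam l) by nra.
    assert (H3 : m * Lam l <= 1/2 * Lam l) by (apply Rmult_le_compat_r; lra).
    unfold K2. lra.
  - fold W. fold A.
    apply Rmult_le_compat_r; auto.
    apply Rmult_le_compat; try lra. left; apply exp_pos.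
    assert (HiC : / C <= 2 * m * (x1 - r0)).
    { rewrite <- (Rinv_inv (2 * m * (x1 - r0))). apply Rinv_le_contravar; auto.
      apply Rinv_0_lt_compat; auto. }
    assert (Hexp : - (2 * mu * (x1 - r0)) <= - INR l / C).
    { unfold mu. unfold Rdiv. assert (INR l * / C <= INR l * (2 * m * (x1 - r0))).
      apply Rmult_le_compat_l; lra. nra. }
    destruct Hexp as [h|h]. left; apply exp_increasing; auto. rewrite h; right; reflexivity.
Qed.
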